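(* For every integer $n\ge1$, \[ \sum_{\substack{m+k=n\\ m\ge1,\ k\ge0}}q_\psi(m)\,\Omega_m(k)=\begin{cases}-\omega(n)&\text{if } n \text{ is odd},\\ -\omega(n)+\omega(n/2)&\text{if } n\text{ is even}.\end{cases} \]
   Context: $q_\psi(n)$ is the number of partitions of $n$ into distinct parts whose parts have greatest common divisor $1$. $\omega:\mathbb{Z}\to\mathbb{Z}$ is defined by $\omega(0)=1$; $\omega(m)=(-1)^j$ if $m=\frac{3j^2\pm j}{2}$ for some integer $j\ge1$; $\omega(m)=0$ otherwise (in particular for $m<0$). For $m\ge1$ and integer $k$, $\Omega_m(k)=\sum_{j\ge0}\omega(k-jm)=\omega(k)+\omega(k-m)+\omega(k-2m)+\cdots$. *)

(* Defs.v *)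
From mathcomp Require Import all_boot all_order all_algebra.
Set Implicit Arguments. Unset Strict Implicit. Unset Printing Implicit Defensive.
Import Order.TTheory GRing.Theory Num.Theory.

(* A partition of n into distinct parts is a finite set of positive integers
   summing to n; parts are at most n, so we represent it as a set of elements of
   'I_(n.+1) not containing 0. *)
Definition is_distinct_partition (n : nat) (S : {set 'I_n.+1}) : bool :=
  (ord0 \notin S) && (\sum_(i in S) (i : nat) == n)%N.

Definition parts_gcd (n : nat) (S : {set 'I_n.+1}) : nat :=
  \big[gcdn/0%N]_(i in S) (i : nat).

Definition q_psi (n : nat) : nat :=
  #|[set S : {set 'I_n.+1} | is_distinct_partition S && (parts_gcd S == 1%N)]|.

Local Open Scope ring_scope.

(* m (a natural number) is (3j^2 + j)/2 resp. (3j^2 - j)/2 for some j >= 1 with j even/odd.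
   Since (3j^2 - j)/2 >= j, it suffices to search j <= m. *)
Definition pent_plus (m j : nat) : bool := (2 * m == 3 * j ^ 2 + j)%N.
Definition pent_minus (m j : nat) : bool := (2 * m + j == 3 * j ^ 2)%N.

Definition omega (z : int) : int :=
  match z with
  | Posz 0 => 1
  | Posz m =>
      if [exists j : 'I_m.+1, (0 < j)%N && (pent_plus m j || pent_minus m j)]
      then (if [exists j : 'I_m.+1, (0 < j)%N && ~~ odd j && (pent_plus m j || pent_minus m j)]
            then 1 else -1)
      else 0
  | Negz _ => 0
  end.

(* Omega_m(k) = sum_{j>=0} omega(k - j m); for k >= 0 and m >= 1 all terms with
   j > k vanish (negative argument), so the sum is truncated to j <= k. *)
Definition Omega (m : nat) (k : nat) : int :=
  \sum_(j < k.+1) omega (k%:Z - (j * m)%:Z).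

(* Main.v *)
Require Import Defs.
From mathcomp Require Import all_boot all_order all_algebra.
From mathcomp Require Import ring lra zify.
Set Implicit Arguments. Unset Strict Implicit. Unset Printing Implicit Defensive.
Import Order.TTheory GRing.Theory Num.Theory.

Lemma gcd_dvd N (S : {set 'I_N.+1}) (s : 'I_N.+1) : s \in S -> (parts_gcd S %| s)%N.
Proof. by move=> sS; rewrite /parts_gcd (bigD1 s) //= dvdn_gcdl. Qed.

Section Scale.
Variables (m d : nat).
Hypothesis (d0 : (0 < d)%N).
Definition sc (t : 'I_m.+1) : 'I_(d * m).+1 := inord (d * t).
Lemma scE t : (sc t : nat) = (d * t)%N.
Proof. by rewrite inordK // ltnS leq_mul2l -ltnS ltn_ord orbT. Qed.
Lemma sc_inj : injective sc.
Proof. by move=> t1 t2 /(congr1 val); rewrite /= !scE => /eqP; rewrite eqn_pmul2l // => /eqP /val_inj. Qed.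
Definition phi (T : {set 'I_m.+1}) := sc @: T.
Lemma phi_sum T : (\sum_(i in phi T) (i : nat) = d * \sum_(t in T) (t : nat))%N.
Proof.
rewrite /phi big_imset /=; last by move=> x y _ _; apply: sc_inj.
by rewrite big_distrr /=; apply: eq_bigr => t _; rewrite scE.
Qed.
Lemma phi_gcd T : parts_gcd (phi T) = (d * parts_gcd T)%N.
Proof.
rewrite /parts_gcd /phi big_imset /=; last by move=> x y _ _; apply: sc_inj.
rewrite (big_morph (muln d) (muln_gcdr d) (muln0 d)).
by apply: eq_bigr => t _; rewrite scE.
Qed.
Lemma phi0 T : (ord0 \in phi T) = (ord0 \in T).
Proof.
apply/imsetP/idP => [[t tT /(congr1 val)] | T0]; last by exists ord0 => //; apply: val_inj; change (0%N = nat_of_ord (sc ord0)); rewrite scE muln0.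
change (0%N = nat_of_ord (sc t) -> ord0 \in T); rewrite scE => /esym /eqP; rewrite muln_eq0 eqn0Ngt d0 /= => /eqP t0.
by have -> : ord0 = t by apply: val_inj.
Qed.
End Scale.

Lemma card_gcd_class N m d : (0 < m)%N -> (0 < d)%N -> N = (d * m)%N ->
  #|[set S : {set 'I_N.+1} | is_distinct_partition S && (parts_gcd S == d)]| = q_psi m.
Proof.
move=> m0 d0 ->.
rewrite /q_psi -(card_imset _ (imset_inj (@sc_inj m d d0))).
apply: eq_card => S; rewrite inE.
apply/idP/imsetP => [/andP [/andP [S0 SN] Sg] | [T]].
  pose g (s : 'I_(d * m).+1) : 'I_m.+1 := inord (s %/ d).
  have PT : @phi m d [set g s | s in S] = S.
    rewrite /phi -imset_comp (eq_in_imset (g := id)) ?imset_id // => s sS /=.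
    have dvs : (d %| s)%N by have := gcd_dvd sS; rewrite (eqP Sg).
    have sm : (s %/ d < m.+1)%N.
      have h := ltn_ord s; rewrite ltnS leq_divLR //; move: h; move: (nat_of_ord s) => x; lia.
    by apply: val_inj; rewrite /= scE /g inordK // mulnC divnK.
  exists [set g s | s in S] => //.
  rewrite inE /is_distinct_partition -(@phi0 m d d0) PT S0 /=.
  have e1 : (\sum_(t in [set g s | s in S]) (t:nat) == m)%N by rewrite -(eqn_pmul2l d0) -(phi_sum d0) PT.
  have e2 : (parts_gcd [set g s | s in S] == 1)%N by rewrite -(eqn_pmul2l d0) -(phi_gcd d0) PT muln1.
  by rewrite e1 e2.
rewrite inE => /andP [/andP [T0 TN] Tg] ->.
by rewrite -/(phi d T) /is_distinct_partition (phi0 d0) T0 (phi_sum d0) (phi_gcd d0) (eqP TN) (eqP Tg) muln1 !eqxx.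
Qed.

Lemma card_sum (T : finType) (P : pred T) : #|[set x | P x]| = (\sum_x (P x : nat))%N.
Proof. by rewrite cardsE -sum1_card big_mkcond /=; apply: eq_bigr => x _; have -> : (x \in P) = P x by []; case: (P x). Qed.

Lemma gcd_pos N (S : {set 'I_N.+1}) : (0 < N)%N -> is_distinct_partition S ->
  (0 < parts_gcd S)%N && (parts_gcd S %| N)%N.
Proof.
move=> N0 /andP [S0 /eqP SN].
case: (set_0Vmem S) => [E | [s sS]].
  by move: SN N0; rewrite E big_set0 => <-.
have s0 : (0 < s)%N.
  rewrite lt0n; apply/negP => /eqP e.
  have : s = ord0 by apply: val_inj.
  by move=> es; move: S0; rewrite -es sS.
apply/andP; split.
  have := gcd_dvd sS; case: (parts_gcd S) => //; rewrite dvd0n => /eqP e; by rewrite e in s0.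
have : (parts_gcd S %| \sum_(i in S) i)%N by apply: dvdn_sum => i iS; exact: gcd_dvd.
by rewrite SN.
Qed.

Lemma divn_div_self N g : (0 < N)%N -> (g %| N)%N -> (N %/ (N %/ g) = g)%N.
Proof.
move=> N0 /dvdnP [k Nk]; rewrite Nk in N0 *.
have k0 : (0 < k)%N by move: N0; rewrite muln_gt0 => /andP [].
have g0 : (0 < g)%N by move: N0; rewrite muln_gt0 => /andP [].
by rewrite mulnK // mulKn.
Qed.

Lemma dp_split N n : (0 < N)%N -> (N <= n)%N ->
  #|[set S : {set 'I_N.+1} | is_distinct_partition S]| =
  (\sum_(m < n.+1 | (1 <= m)%N && (m %| N)%N) q_psi m)%N.
Proof.
move=> N0 Nn.
have Hc : forall m : 'I_n.+1, (1 <= m)%N && (m %| N)%N -> q_psi m =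
   (\sum_(S : {set 'I_N.+1}) ((is_distinct_partition S && (parts_gcd S == N %/ m)) : nat))%N.
  move=> m /andP [m1 mN]; rewrite -card_sum.
  have d0 : (0 < N %/ m)%N by rewrite divn_gt0 // dvdn_leq.
  have Nd : N = (N %/ m * m)%N by rewrite divnK.
  by rewrite (@card_gcd_class N m (N %/ m) m1 d0 Nd).
rewrite (eq_bigr _ Hc) exchange_big /= card_sum; apply: eq_bigr => S _.
case DS: (is_distinct_partition S); last by rewrite big1.
have /andP [g0 gN] := gcd_pos N0 DS.
set g := parts_gcd S in g0 gN *.
have m0lt : (N %/ g < n.+1)%N.
  by rewrite ltnS (leq_trans _ Nn) // leq_div.
have m0C : (1 <= N %/ g)%N && (N %/ g %| N)%N.
  by rewrite divn_gt0 // dvdn_leq // dvdn_div.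
rewrite (bigD1 (Ordinal m0lt)) //= big1 ?addn0.
  by rewrite divn_div_self // eqxx.
move=> m /andP [/andP [m1 mN] mm0].
apply/eqP; rewrite eqb0; apply/negP => /eqP gm.
move/negP: mm0; apply; rewrite -val_eqE /=; apply/eqP.
by rewrite gm divn_div_self.
Qed.

Local Open Scope ring_scope.

Fixpoint tri (k : nat) : nat := if k is k'.+1 then (tri k' + k'.+1)%N else 0%N.
Lemma tri2 k : (2 * tri k = k * k.+1)%N.
Proof. elim: k => [|k IH] //=; rewrite mulnDr IH; lia. Qed.

Lemma pm_eq d j : (d == (j.+1)^2 + tri j)%N = pent_minus d j.+1.
Proof.
rewrite /pent_minus; have := tri2 j; move=> T; apply/eqP/eqP => /=; rewrite ?expnS ?expn0 ?muln1; nia.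
Qed.
Lemma pp_eq d j : (d == (j.+1)^2 + tri j.+1)%N = pent_plus d j.+1.
Proof.
rewrite /pent_plus; have := tri2 j.+1; move=> T; apply/eqP/eqP; rewrite ?expnS ?expn0 ?muln1; nia.
Qed.

Lemma pent_le d j : (0 < j)%N -> pent_plus d j || pent_minus d j -> (j <= d)%N.
Proof.
rewrite /pent_plus /pent_minus ?expnS ?expn0 ?muln1 => j0 /orP[] /eqP; nia.
Qed.

Lemma pent_uniq d j1 j2 : (0 < j1)%N -> (0 < j2)%N ->
  pent_plus d j1 || pent_minus d j1 -> pent_plus d j2 || pent_minus d j2 -> j1 = j2.
Proof.
rewrite /pent_plus /pent_minus ?expnS ?expn0 ?muln1 => h1 h2.
case: (ltngtP j1 j2) => // H /orP[] /eqP E1 /orP[] /eqP E2; nia.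
Qed.

Lemma pent_excl d j : (0 < j)%N -> pent_plus d j -> pent_minus d j -> False.
Proof. rewrite /pent_plus /pent_minus ?expnS ?expn0 ?muln1 => h /eqP E1 /eqP E2; nia. Qed.

Definition fsum (d : nat) (j : nat) : int :=
  (-1)^+(j.+1) * ((pent_minus d j.+1)%:R + (pent_plus d j.+1)%:R).

Lemma omega_sum d B : (d <= B)%N -> (0 < d)%N -> omega d%:Z = \sum_(j < B) fsum d j.
Proof.
case: d => // d dB _.
rewrite /omega.
case: ifP => [/existsP [j0 /andP [j0p Hj0]] | /existsP Hn].
  have jB : (j0.-1 < B)%N.
    by rewrite prednK //; move: (ltn_ord j0); rewrite ltnS => h; exact: leq_trans h dB.
  have Hf : forall j : 'I_B, j != Ordinal jB -> fsum d.+1 j = 0.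
    move=> j; rewrite -val_eqE /= => Hj.
    rewrite /fsum.
    case E: (pent_plus d.+1 j.+1 || pent_minus d.+1 j.+1).
      have := pent_uniq (ltn0Sn j) j0p E Hj0 => Ej.
      by move: Hj; rewrite -Ej /= eqxx.
    by move/negbT: E; rewrite negb_or => /andP [/negbTE -> /negbTE ->]; rewrite mulr0.
  rewrite (bigD1 (Ordinal jB) isT) /= big1 ?addr0; last by move=> j /Hf.
  rewrite /fsum prednK //.
  have Hs : (pent_minus d.+1 j0)%:R + (pent_plus d.+1 j0)%:R = 1 :> int.
    case/orP: Hj0 => H; rewrite H.
      by case E: (pent_minus d.+1 j0) => //; case: (pent_excl j0p H E).
    by case E: (pent_plus d.+1 j0) => //; case: (pent_excl j0p E H).
  rewrite Hs mulr1 -signr_odd.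
  case: ifP => [/existsP [j1 /andP [/andP [j1p j1e] Hj1]] | /existsP Hn].
    by have := pent_uniq j1p j0p Hj1 Hj0 => E; rewrite -E (negbTE j1e).
  case O: (odd j0) => //; exfalso; apply: Hn; exists j0; rewrite j0p Hj0 O //.
rewrite big1 // => j _.
rewrite /fsum.
case E: (pent_plus d.+1 j.+1 || pent_minus d.+1 j.+1).
  exfalso; apply: Hn.
  have jd : (j.+1 < d.+2)%N by rewrite ltnS; apply: pent_le E.
  by exists (Ordinal jd); rewrite /= E.
by move/negbT: E; rewrite negb_or => /andP [/negbTE -> /negbTE ->]; rewrite mulr0.
Qed.
Definition PP (n k : nat) : {poly int} := \prod_(k <= i < n) (1 - 'X^(i.+1)).
Definition term (n k : nat) : {poly int} := (-1)^+k * PP n k * 'X^(n*k + tri k).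
Definition SS (n : nat) : {poly int} := \sum_(k < n.+1) term n k.
Definition pent (n : nat) : {poly int} :=
  \sum_(j < n) (-1)^+(j.+1) * ('X^((j.+1)^2 + tri j) + 'X^((j.+1)^2 + tri j.+1)).

Lemma PP_recr n k : (k <= n)%N -> PP n.+1 k = PP n k * (1 - 'X^(n.+1)).
Proof. by move=> kn; rewrite /PP big_nat_recr. Qed.

Lemma PP_recl n k : (k < n)%N -> PP n k = (1 - 'X^(k.+1)) * PP n k.+1.
Proof. by move=> kn; rewrite /PP big_ltn. Qed.

Lemma PPnn n : PP n n = 1.
Proof. by rewrite /PP big_geq. Qed.

Lemma SS_step n : SS n.+1 = SS n +
   (-1)^+(n.+1) * ('X^((n.+1)^2 + tri n) + 'X^((n.+1)^2 + tri n.+1)).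
Proof.
pose c k := (-1)^+k * PP n k * 'X^(n*k + tri k) : {poly int}.
pose u k := c k * 'X^k * 'X^(n.+1).
pose w k := c k * ('X^k - 1).
have Hterm : forall k : 'I_n.+1, term n.+1 k = term n k - u k + w k.
  move=> [k /= kn]; rewrite /term /u /w /c PP_recr //.
  have -> : 'X^(n.+1 * k + tri k) = 'X^(n * k + tri k) * 'X^k :> {poly int}.
    by rewrite -exprD; congr (_ ^+ _); lia.
  ring.
have Hw : forall k, (k < n)%N -> w k.+1 = u k.
  move=> k kn; rewrite /w /u /c (PP_recl kn).
  have -> : 'X^(n * k.+1 + tri k.+1) = 'X^(n * k + tri k) * 'X^(k.+1) * 'X^n :> {poly int}.
    by rewrite -!exprD; congr (_ ^+ _); rewrite /=; lia.
  rewrite !exprS; ring.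
rewrite /SS big_ord_recr /=.
rewrite (eq_bigr (fun k : 'I_n.+1 => term n k - u k + w k)); last by move=> k _; apply: Hterm.
have Hws : \sum_(k < n.+1) w k = \sum_(k < n) u k.
  rewrite big_ord_recl.
  have -> : w 0%N = 0 by rewrite /w expr0 subrr mulr0.
  by rewrite add0r; apply: eq_bigr => k _; apply: Hw.
have Hus : \sum_(k < n.+1) u k = \sum_(k < n) u k + u n by rewrite big_ord_recr.
rewrite !big_split /= sumrN Hws Hus.
rewrite /u /c /term !PPnn.
have -> : 'X^((n.+1)^2 + tri n) = 'X^(n * n + tri n) * 'X^n * 'X^(n.+1) :> {poly int}.
  by rewrite -!exprD; congr (_ ^+ _); rewrite /=; lia.
rewrite !exprS; ring.
Qed.

Lemma Shanks n : SS n = 1 + pent n.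
Proof.
elim: n => [|n IH].
  by rewrite /SS /pent big_ord1 big_ord0 /term PPnn /= !expr0 !mulr1 addr0.
by rewrite SS_step IH /pent big_ord_recr /= addrA.
Qed.

Lemma coef_signr k (p : {poly int}) d : ((-1)^+k * p)`_d = (-1)^+k * p`_d.
by elim: k => [|k IH]; rewrite ?expr0 ?mul1r // !exprS -mulrA !mulN1r coefN IH mulNr.
Qed.

Lemma coef_SS n d : (d <= n)%N -> (SS n)`_d = (PP n 0)`_d.
Proof.
move=> dn; rewrite /SS big_ord_recl coefD coef_sum big1 ?addr0.
  by rewrite /term expr0 mul1r muln0 /= mulr1.
move=> k _; rewrite /term coefMXn ifT //.
rewrite /bump /= !add0n; change (bump 0 k) with k.+1; rewrite mulnS; move: (n * k)%N (tri k) => a b; lia.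
Qed.

Lemma coef_pent n d : (pent n)`_d = \sum_(j < n) fsum d j.
Proof.
rewrite /pent coef_sum; apply: eq_bigr => j _.
by rewrite coef_signr coefD !coefXn pm_eq pp_eq /fsum.
Qed.

Lemma coef_PP n d : (d <= n)%N -> (PP n 0)`_d = omega d%:Z.
Proof.
move=> dn; rewrite -coef_SS // Shanks coefD coef1 coef_pent.
case: d dn => [|d] dn.
  rewrite big1 ?addr0 // => j _.
  rewrite /fsum.
  case E: (pent_plus 0 j.+1 || pent_minus 0 j.+1).
    by have := pent_le (ltn0Sn j) E.
  by move/negbT: E; rewrite negb_or => /andP [/negbTE -> /negbTE ->]; rewrite mulr0.
by rewrite add0r (omega_sum (B := n)).
Qed.

Definition DQ (N : nat) : {poly int} := \prod_(i < N) (1 + 'X^(i.+1)).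

Lemma coef_DQ N : (DQ N)`_N = (#|[set S : {set 'I_N.+1} | is_distinct_partition S]|)%:R.
Proof.
pose F (i : 'I_N.+1) : {poly int} := if i == ord0 then 0 else 'X^i.
have -> : DQ N = \prod_(i : 'I_N.+1) (F i + 1).
  rewrite big_ord_recl /F eqxx add0r mul1r /DQ; apply: eq_bigr => i _.
  have -> : (lift ord0 i == ord0) = false by apply/eqP => /(congr1 val).
  by rewrite addrC lift0.
rewrite bigA_distr coef_sum card_sum natr_sum; apply: eq_bigr => J _.
rewrite -big_mkcond /=.
case J0: (ord0 \in J).
  by rewrite (bigD1 ord0) //= /F eqxx mul0r coef0 /is_distinct_partition J0.
rewrite (eq_bigr (fun i : 'I_N.+1 => 'X^i)); last first.
  by move=> i iJ; rewrite /F; case: eqP => // e; rewrite e J0 in iJ.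
rewrite prodrXr coefXn /is_distinct_partition J0 /= eq_sym.
by case: (_ == _).
Qed.

Lemma coef_DQ_trunc N k : (DQ (N + k))`_N = (DQ N)`_N.
Proof.
elim: k => [|k IH]; first by rewrite addn0.
rewrite addnS /DQ big_ord_recr /= mulrDr mulr1 coefD coefMXn ltnS leq_addr addr0.
exact: IH.
Qed.

Lemma DQPP n : DQ n * PP n 0 = (PP n 0) \Po 'X^2.
Proof.
rewrite /DQ /PP big_mkord -big_split /=.
rewrite (big_morph (fun p : {poly int} => p \Po 'X^2) (fun p q => comp_polyM p q _) (comp_polyC 1 _)).
apply: eq_bigr => i _.
rewrite comp_polyB comp_polyC comp_Xn_poly -exprM mulnC exprM.
ring.
Qed.

Lemma omega_neg n N : (n < N)%N -> omega (n%:Z - N%:Z) = 0.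
Proof.
move=> nN; have : n%:Z - N%:Z < 0 by rewrite subr_lt0 ltz_nat.
by case: (n%:Z - N%:Z).
Qed.

Lemma sum_mult (h : nat -> int) m T : (0 < m)%N ->
  \sum_(0 <= N < (T * m)%N | (m %| N)%N) h N = \sum_(0 <= j < T) h (j * m)%N.
Proof.
move=> m0; elim: T => [|T IH]; first by rewrite mul0n !big_geq.
rewrite big_nat_recr // -IH mulSn addnC (big_cat_nat _ (n := (T * m)%N)) // ?leq_addr.
congr (_ + _).
have HE : dvdn m (muln T m) = true by apply: dvdn_mull.
have lt : (T * m < T * m + m)%N by rewrite -{1}[(T * m)%N]addn0 ltn_add2l.
rewrite big_mkcond (big_ltn lt); cbv beta; case E: (dvdn m (muln T m)); last by move: E; rewrite HE.
rewrite big_nat_cond big1 /= ?addr0 // => N /andP [/andP [N1 N2] _].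
case: ifP => // mN.
exfalso; move: mN.
have -> : N = (T * m + (N - T * m))%N by rewrite subnKC // ltnW.
rewrite dvdn_addr ?dvdn_mull // => /dvdn_leq.
have : (0 < N - T * m)%N by rewrite subn_gt0.
move=> h1 /(_ h1); move: N2 h1; move: (T * m)%N => a; lia. all: done.
Qed.

Lemma sum_trunc (P : pred nat) n K : (n < K)%N ->
  \sum_(0 <= N < K | P N) omega (n%:Z - N%:Z) = \sum_(0 <= N < n.+1 | P N) omega (n%:Z - N%:Z).
Proof.
move=> nK.
have -> : \sum_(0 <= N < K | P N) omega (n%:Z - N%:Z) = \sum_(0 <= N < n.+1 | P N) omega (n%:Z - N%:Z)
   + \sum_(n.+1 <= N < K | P N) omega (n%:Z - N%:Z) by apply: big_cat_nat => //; apply: ltnW.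
have -> : \sum_(n.+1 <= N < K | P N) omega (n%:Z - N%:Z) = 0.
  by rewrite big_nat_cond big1 // => N /andP [/andP [N1 _] _]; apply: omega_neg.
by rewrite addr0.
Qed.

Lemma Omega_eq n m : (1 <= m)%N -> (m <= n)%N ->
  Omega m (n - m) = \sum_(N < n.+1 | (1 <= N)%N && (m %| N)%N) omega (n%:Z - N%:Z).
Proof.
move=> m1 mn.
have E1 : Omega m (n - m) = \sum_(j < (n - m).+1) omega (n%:Z - (j.+1 * m)%N%:Z).
  rewrite /Omega; apply: eq_bigr => j _.
  by rewrite -subzn // mulSn PoszD; congr omega; ring.
have E2 : \sum_(0 <= N < ((n - m).+2 * m)%N | (m %| N)%N) omega (n%:Z - N%:Z) =
          omega (n%:Z - 0%:Z) + Omega m (n - m).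
  by rewrite sum_mult // big_mkord big_ord_recl E1; congr (_ + _).
rewrite sum_trunc in E2; last by move: mn m1; clear; nia.
rewrite -(big_mkord (fun N => (0 < N)%N && (m %| N)%N) (fun N => omega (n%:Z - N%:Z))) big_nat_cond.
have E3 : \sum_(0 <= N < n.+1 | (m %| N)%N) omega (n%:Z - N%:Z) =
   omega (n%:Z - 0%:Z) + \sum_(0 <= i < n.+1 | (0 <= i < n.+1)%N && ((1 <= i)%N && (m %| i)%N)) omega (n%:Z - i%:Z).
  rewrite big_ltn_cond // dvdn0; congr (_ + _).
  rewrite [RHS](big_ltn_cond) //= [RHS]big_nat_cond [LHS]big_nat_cond.
  by apply: eq_bigl => i; case: (0 < i)%N; case: (i < n.+1)%N; case: (m %| i)%N.
by move: E2; rewrite E3 => /addrI.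
Qed.

Lemma split0 n (f : nat -> int) : \sum_(N < n.+1) f N = f 0%N + \sum_(N < n.+1 | (1 <= N)%N) f N.
Proof.
rewrite (bigD1 ord0) //=; congr (_ + _); apply: eq_bigl => i.
by rewrite lt0n -val_eqE.
Qed.

Theorem mainTheorem9 (n : nat) (hn : (1 <= n)%N) :
  \sum_(m < n.+1 | (1 <= m)%N) (q_psi m)%:Z * Omega m (n - m)%N =
  (if odd n then - omega n%:Z
   else - omega n%:Z + omega (n./2)%:Z).
Proof.
pose h N := omega (n%:Z - N%:Z).
have SA : \sum_(m < n.+1 | (1 <= m)%N) (q_psi m)%:Z * Omega m (n - m)%N =
   \sum_(m < n.+1 | (1 <= m)%N) \sum_(N < n.+1 | (1 <= N)%N && (m %| N)%N) (q_psi m)%:Z * h N.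
  by apply: eq_bigr => m m1; rewrite Omega_eq // ?mulr_sumr // -ltnS ltn_ord.
have SB : \sum_(m < n.+1 | (1 <= m)%N) \sum_(N < n.+1 | (1 <= N)%N && (m %| N)%N) (q_psi m)%:Z * h N
   = \sum_(N < n.+1 | (1 <= N)%N) h N * (#|[set S : {set 'I_N.+1} | is_distinct_partition S]|)%:R.
  under eq_bigr do rewrite big_mkcondr.
  rewrite exchange_big; apply: eq_bigr => N N1.
  rewrite -big_mkcondr (dp_split N1 (ltn_ord N : (N <= n)%N)) /= natr_sum mulr_sumr.
  by apply: eq_bigr => k _; rewrite mulrC natz.
have SC : forall N : 'I_n.+1, h N * (#|[set S : {set 'I_N.+1} | is_distinct_partition S]|)%:R
     = (DQ n)`_N * (PP n 0)`_(n - N).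
  move=> N; have Nn : (N <= n)%N by rewrite -ltnS.
  rewrite -coef_DQ -(coef_DQ_trunc N (n - N)) subnKC // coef_PP ?leq_subr // mulrC /h subzn //.
have SD : (DQ n * PP n 0)`_n = (if odd n then 0 else omega (n./2)%:Z).
  rewrite DQPP coef_comp_poly_Xn // dvdn2 -divn2.
  by case: (odd n) => //=; rewrite coef_PP // leq_div.
have SE : (DQ n * PP n 0)`_n = omega n%:Z + \sum_(N < n.+1 | (1 <= N)%N) (DQ n)`_N * (PP n 0)`_(n - N).
  rewrite coefM (split0 n (fun N => (DQ n)`_N * (PP n 0)`_(n - N))) subn0 coef_PP //.
  by rewrite -(add0n n) coef_DQ_trunc /DQ big_ord0 coef1 mul1r.
rewrite SA SB (eq_bigr _ (fun N _ => SC N)).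
have -> : \sum_(N < n.+1 | (1 <= N)%N) (DQ n)`_N * (PP n 0)`_(n - N) =
   (DQ n * PP n 0)`_n - omega n%:Z by rewrite SE; ring.
rewrite SD; case: (odd n); first by rewrite add0r.
by rewrite addrC.
Qed.
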